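(* Let $(G,\tau,\oplus)$ be a topological gyrogroup and let $G^{\bullet}$ be the gyrogroup of step functions defined in the context. Then the family $\{O(V,\varepsilon): V \text{ an open neighbourhood of } 0 \text{ in } G,\ \varepsilon>0\}$ is a local base at the identity $\mathbf{0}^{\bullet}$ of a topology on $G^{\bullet}$ which makes $(G^{\bullet},\oplus^{\bullet})$ a Hausdorff topological gyrogroup; in this topology, for each $f\in G^{\bullet}$ the sets $f\oplus^{\bullet}O(V,\varepsilon)$ form a local base at $f$.
   Context: A gyrogroup is a set $G$ with a binary operation $\oplus$ such that: (G1) there is a unique identity $0$ with $0\oplus a=a=a\oplus 0$; (G2) each $x$ has a unique inverse $\ominus x$ with $\ominus x\oplus x=0=x\oplus(\ominus x)$; (G3) for all $x,y$ there is an automorphism $\mathrm{gyr}[x,y]$ of $(G,\oplus)$ with $x\oplus(y\oplus z)=(x\oplus y)\oplus \mathrm{gyr}[x,y](z)$ for all $z$; (G4) $\mathrm{gyr}[x\oplus y,y]=\mathrm{gyr}[x,y]$. A topological gyrogroup is a gyrogroup with a topology (all spaces are assumed $T_1$) such that $\oplus:G\times G\to G$ is jointly continuous and $x\mapsto\ominus x$ is continuous. Construction: let $J=[0,1)$ and let $G^{\bullet}$ be the set of all functions $f:J\to G$ for which there exist $0=a_0<a_1<\dots<a_n=1$ with $f$ constant on each $[a_k,a_{k+1})$. Define $(f\oplus^{\bullet}g)(r)=f(r)\oplus g(r)$; then $(G^{\bullet},\oplus^{\bullet})$ is a gyrogroup with identity $\mathbf{0}^{\bullet}$ (the constant function $0$),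 inverse $(\ominus^{\bullet}f)(r)=\ominus f(r)$, and gyrations $\mathrm{gyr}[f,g](h)(r)=\mathrm{gyr}[f(r),g(r)](h(r))$. For an open neighbourhood $V$ of $0$ in $G$ and $\varepsilon>0$ let $O(V,\varepsilon)=\{f\in G^{\bullet}:\mu(\{r\in J: f(r)\notin V\})<\varepsilon\}$, where $\mu$ is Lebesgue measure. *)

(* Defs.v *)
From HB Require Import structures.
From mathcomp Require Import all_boot all_order all_algebra.
From mathcomp Require Import all_classical all_reals all_analysis.
Set Implicit Arguments. Unset Strict Implicit. Unset Printing Implicit Defensive.
Import Order.TTheory GRing.Theory Num.Theory.
Local Open Scope classical_set_scope.
Local Open Scope ring_scope.

Definition gyr_automorphisms {X : Type} (S : set X) (op : X -> X -> X)
    (gyr : X -> X -> X -> X) : Prop :=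
  forall x y, S x -> S y ->
    [/\ (forall z, S z -> S (gyr x y z)),
        (forall z w, S z -> S w -> gyr x y z = gyr x y w -> z = w),
        (forall w, S w -> exists2 z, S z & gyr x y z = w) &
        (forall a b, S a -> S b -> gyr x y (op a b) = op (gyr x y a) (gyr x y b))].

Definition is_gyrogroup {X : Type} (S : set X) (op : X -> X -> X) (z : X)
    (inv : X -> X) : Prop :=
  [/\
      [/\ S z, (forall a b, S a -> S b -> S (op a b)) &
           (forall a, S a -> S (inv a))],
      (forall a, S a -> op z a = a /\ op a z = a) /\
      (forall z', S z' -> (forall a, S a -> op z' a = a /\ op a z' = a) -> z' = z),
      (forall x, S x -> op (inv x) x = z /\ op x (inv x) = z) /\
      (forall x y, S x -> S y -> op y x = z -> op x y = z -> y = inv x) &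
      exists gyr : X -> X -> X -> X,
        [/\ gyr_automorphisms S op gyr,
            (forall x y w, S x -> S y -> S w ->
               op x (op y w) = op (op x y) (gyr x y w)) &
            (forall x y w, S x -> S y -> S w ->
               gyr (op x y) y w = gyr x y w)]].

Definition topology_on {X : Type} (S : set X) (T : set (set X)) : Prop :=
  [/\ (forall U, T U -> U `<=` S),
      T S, T set0,
      (forall F : set (set X), F `<=` T -> T (\bigcup_(U in F) U)) &
      (forall U V, T U -> T V -> T (U `&` V))].

Definition T1_on {X : Type} (S : set X) (T : set (set X)) : Prop :=
  forall x y, S x -> S y -> x <> y -> exists2 U, T U & U x /\ ~ U y.

Definition hausdorff_on {X : Type} (S : set X) (T : set (set X)) : Prop :=
  forall x y, S x -> S y -> x <> y ->
    exists U, exists V, [/\ T U, T V, U x, V y & U `&` V = set0].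

Definition prod_open {X : Type} (S : set X) (T : set (set X)) (W : set (X * X)) :
    Prop :=
  W `<=` S `*` S /\
  forall p, W p -> exists U, exists V,
    [/\ T U, T V, U p.1, V p.2 & U `*` V `<=` W].

Definition continuous_op {X : Type} (S : set X) (T : set (set X))
    (op : X -> X -> X) : Prop :=
  forall W, T W -> prod_open S T [set p | (S `*` S) p /\ W (op p.1 p.2)].

Definition continuous_on_carrier {X : Type} (S : set X) (T : set (set X)) (f : X -> X) :
    Prop :=
  forall W, T W -> T [set x | S x /\ W (f x)].

(* topological gyrogroup (all spaces are assumed T1) *)
Definition is_topological_gyrogroup {X : Type} (S : set X) (T : set (set X))
    (op : X -> X -> X) (z : X) (inv : X -> X) : Prop :=
  [/\ is_gyrogroup S op z inv, topology_on S T, T1_on S T,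
      continuous_op S T op & continuous_on_carrier S T inv].

Definition is_nbhd {X : Type} (T : set (set X)) (x : X) (N : set X) : Prop :=
  exists2 U, T U & U x /\ U `<=` N.

Definition J (R : realType) := {r : R | (0 <= r) && (r < 1)}.

Definition is_step {R : realType} {G : Type} (f : J R -> G) : Prop :=
  exists (n : nat) (a : nat -> R),
    [/\ a 0%N = 0, a n = 1,
        (forall k, (k < n)%N -> a k < a k.+1) &
        (forall k, (k < n)%N -> forall r s : J R,
           a k <= sval r < a k.+1 -> a k <= sval s < a k.+1 -> f r = f s)].

Definition stepfuns (R : realType) (G : Type) : set (J R -> G) := [set f | is_step f].
Arguments stepfuns : clear implicits.

Definition op_pt {R : realType} {G : Type} (op : G -> G -> G) (f g : J R -> G) :
  J R -> G := fun r => op (f r) (g r).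
Definition zero_pt {R : realType} {G : Type} (z : G) : J R -> G := fun _ => z.
Definition inv_pt {R : realType} {G : Type} (inv : G -> G) (f : J R -> G) :
  J R -> G := fun r => inv (f r).

Definition Obig {R : realType} {G : Type} (V : set G) (eps : R) : set (J R -> G) :=
  [set f : J R -> G | is_step f /\
     (lebesgue_measure [set r : R | exists h : ((0 <= r) && (r < 1))%R,
                                     ~ V (f (exist _ r h))] < eps%:E)%E].

(* Main.v *)
Require Import Defs.
From HB Require Import structures.
From mathcomp Require Import all_boot all_order all_algebra.
From mathcomp Require Import all_classical all_reals all_analysis.
From Stdlib Require List.
From mathcomp Require Import lra.
Set Implicit Arguments. Unset Strict Implicit. Unset Printing Implicit Defensive.
Import Order.TTheory GRing.Theory Num.Theory.
Local Open Scope classical_set_scope.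
Local Open Scope ring_scope.

Section All.
Variable R : realType.
Variables (G : Type) (op : G -> G -> G) (z : G) (inv : G -> G) (tau : set (set G)).
Hypothesis Htg : is_topological_gyrogroup setT tau op z inv.

Lemma gg : is_gyrogroup setT op z inv. Proof. by case: Htg. Qed.
Lemma gtop : topology_on setT tau. Proof. by case: Htg. Qed.
Lemma tauT : tau setT. Proof. by case: gtop. Qed.
Lemma tauI U V : tau U -> tau V -> tau (U `&` V). Proof. by case: gtop => _ _ _ _; apply. Qed.

Lemma opzl a : op z a = a. Proof. by case: gg => _ [H _] _ _; case: (H a I). Qed.
Lemma opzr a : op a z = a. Proof. by case: gg => _ [H _] _ _; case: (H a I). Qed.
Lemma invl a : op (inv a) a = z. Proof. by case: gg => _ _ [H _] _; case: (H a I). Qed.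
Lemma invr a : op a (inv a) = z. Proof. by case: gg => _ _ [H _] _; case: (H a I). Qed.
Lemma inv_uniq x y : op y x = z -> op x y = z -> y = inv x.
Proof. by case: gg => _ _ [_ H] _; apply: H. Qed.

Lemma gyr_ex : exists gyr : G -> G -> G -> G,
  [/\ (forall x y u w, gyr x y u = gyr x y w -> u = w),
      (forall x y w, exists z', gyr x y z' = w),
      (forall x y a b, gyr x y (op a b) = op (gyr x y a) (gyr x y b)),
      (forall x y w, op x (op y w) = op (op x y) (gyr x y w)) &
      (forall x y w, gyr (op x y) y w = gyr x y w)].
Proof.
case: gg => _ _ _ [gyr [Ha H3 H4]]; exists gyr; split.
- by move=> x y u w; case: (Ha x y I I) => _ Hi _ _; apply: Hi.
- by move=> x y w; case: (Ha x y I I) => _ _ Hs _; case: (Hs w I) => z' _ ?; exists z'.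
- by move=> x y a b; case: (Ha x y I I) => _ _ _ Hh; apply: Hh.
- by move=> x y w; apply: H3.
- by move=> x y w; apply: H4.
Qed.

Lemma lcancel a b c : op a b = op a c -> b = c.
Proof.
case: gyr_ex => gyr [Hi _ _ H3 _] E.
apply: (Hi (inv a) a).
by rewrite -[gyr _ _ b]opzl -[gyr _ _ c]opzl -(invl a) -!H3 E.
Qed.

Lemma invK a : inv (inv a) = a.
Proof. by apply/esym/inv_uniq; [apply: invr | apply: invl]. Qed.

Lemma inv0 : inv z = z.
Proof. by apply/esym/inv_uniq; rewrite opzl. Qed.

Lemma cancel1 a b : op (inv a) (op a b) = b.
Proof.
case: gyr_ex => gyr [Hi _ _ H3 H4].
rewrite H3 invl opzl -H4 invl.
apply: (@lcancel a); have := H3 z a b; rewrite !opzl => <-; done.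
Qed.

Lemma cancel2 a b : op a (op (inv a) b) = b.
Proof. by rewrite -{1}(invK a) cancel1. Qed.

Definition contP (F : G -> G -> G) := forall W x y, tau W -> W (F x y) ->
  exists A B, [/\ tau A, tau B, A x, B y &
     forall x' y', A x' -> B y' -> W (F x' y')].

Lemma contP_fst : contP (fun x _ => x).
Proof. by move=> W x y tW Wx; exists W, setT; split => //; apply: tauT. Qed.
Lemma contP_snd : contP (fun _ y => y).
Proof. by move=> W x y tW Wx; exists setT, W; split => //; apply: tauT. Qed.
Lemma contP_cst c : contP (fun _ _ => c).
Proof. by move=> W x y tW Wx; exists setT, setT; split => //; apply: tauT. Qed.

Lemma contP_op F1 F2 : contP F1 -> contP F2 -> contP (fun x y => op (F1 x y) (F2 x y)).
Proof.
move=> c1 c2 W x y tW Wxy.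
case: Htg => _ _ _ Hop _.
have [_ /(_ (F1 x y, F2 x y))] := Hop W tW.
case=> [|U [V [tU tV Ux Vy UV]]]; first by split.
have [A1 [B1 [tA1 tB1 A1x B1y H1]]] := c1 U x y tU Ux.
have [A2 [B2 [tA2 tB2 A2x B2y H2]]] := c2 V x y tV Vy.
exists (A1 `&` A2), (B1 `&` B2); split; try by apply: tauI.
- by split.
- by split.
move=> x' y' [a1 a2] [b1 b2].
have := UV (F1 x' y', F2 x' y'); case; last by [].
by split; [apply: H1 | apply: H2].
Qed.

Lemma contP_inv F : contP F -> contP (fun x y => inv (F x y)).
Proof.
move=> c W x y tW Wxy.
case: Htg => _ _ _ _ Hinv.
have := c _ x y (Hinv W tW); case.
  by split.
move=> A [B [tA tB Ax By H]]; exists A, B; split => // x' y' Ax' By'.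
by case: (H x' y' Ax' By').
Qed.

Lemma fin_inter (C : Type) (s : list C) (P : C -> Prop) (F : C -> G -> G -> G) V :
 (forall c, P c -> exists A B, [/\ tau A, tau B, A z, B z &
     forall x y, A x -> B y -> V (F c x y)]) ->
 exists A B, [/\ tau A, tau B, A z, B z & forall c, List.In c s -> P c ->
     forall x y, A x -> B y -> V (F c x y)].
Proof.
move=> H; elim: s => [|c s [A [B [tA tB Az Bz IH]]]].
  by exists setT, setT; split => //; apply: tauT.
case: (pselect (P c)) => Pc.
  have [A' [B' [tA' tB' A'z B'z H']]] := H c Pc.
  exists (A `&` A'), (B `&` B'); split; try by apply: tauI.
  - by split.
  - by split.
  move=> c' [<-|Hc] Pc' x y [ax ax'] [bx bx']; first by apply: H'.
  by apply: IH.
exists A, B; split => // c' [<-|Hc] //; exact: IH.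
Qed.

Lemma Jbnd (r : J R) : 0 <= sval r /\ sval r < 1.
Proof. by case: r => x /= /andP. Qed.

Lemma step_dep X Y (p : J R -> X) (q : J R -> Y) : is_step p ->
  (forall r t, p r = p t -> q r = q t) -> is_step q.
Proof.
case=> n [a [H0 H1 H2 H3]] Hq; exists n, a; split => // k kn r s Hr Hs.
by apply: Hq; exact: H3 k kn r s Hr Hs.
Qed.

Lemma step_const X (c : X) : is_step (fun _ : J R => c).
Proof.
exists 1%N, (fun k => k%:R); split => //.
by move=> k _; rewrite ltr_nat.
Qed.

Lemma part_mono n (a : nat -> R) : (forall k, (k < n)%N -> a k < a k.+1) ->
  forall i j, (i <= j)%N -> (j <= n)%N -> a i <= a j.
Proof.
move=> H i j; elim: j => [|j IH].
  by rewrite leqn0 => /eqP ->.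
rewrite leq_eqVlt => /orP [/eqP -> //|]; rewrite ltnS => ij jn.
by apply: le_trans (IH ij (ltnW jn)) _; apply/ltW/H.
Qed.

Lemma part_locate n (a : nat -> R) : a 0%N = 0 -> a n = 1 ->
  (forall k, (k < n)%N -> a k < a k.+1) ->
  forall x, 0 <= x -> x < 1 -> exists k, (k < n)%N /\ a k <= x < a k.+1.
Proof.
move=> H0 H1 H2 x x0 x1.
have: forall m, (m <= n)%N -> a m <= x \/ exists k, (k < m)%N /\ a k <= x < a k.+1.
  elim=> [|m IH] mn; first by left; rewrite H0.
  case: (IH (ltnW mn)) => [am|[k [km Hk]]]; last by right; exists k; split => //; apply: ltnW.
  case: (leP (a m.+1) x) => h; first by left.
  by right; exists m; split => //; rewrite am.
case/(_ n (leqnn n)) => [|[k [kn Hk]]]; last by exists k.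
by rewrite H1 => h; move: (lt_le_trans x1 h); rewrite ltxx.
Qed.

Lemma step_frange X (f : J R -> X) : is_step f -> exists s : list X, forall r, List.In (f r) s.
Proof.
case=> n [a [H0 H1 H2 H3]].
have r0p : (0 <= (0:R)) && ((0:R) < 1) by rewrite lexx ltr01.
pose r0 : J R := exist _ 0 r0p.
have: forall k, exists x, forall r, (k < n)%N -> a k <= sval r < a k.+1 -> f r = x.
  move=> k; case: (pselect (exists r : J R, (k < n)%N /\ a k <= sval r < a k.+1)).
    case=> r [kn Hr]; exists (f r) => t _ Ht; exact: H3 k kn t r Ht Hr.
  by move=> Hn; exists (f r0) => r kn Hr; exfalso; apply: Hn; exists r.
move=> Hex; have [v Hv] := choice Hex.
have: forall m, exists s, forall k, (k < m)%N -> List.In (v k) s.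
  elim=> [|m [s Hs]]; first by exists nil.
  exists (v m :: s) => k; rewrite ltnS leq_eqVlt => /orP [/eqP ->|km]; first by left.
  by right; apply: Hs.
case/(_ n) => s Hs; exists s => r.
have [r0' r1] := Jbnd r.
have [k [kn Hk]] := @part_locate n a H0 H1 H2 _ r0' r1.
by rewrite (Hv k r kn Hk); apply: Hs.
Qed.

Definition stepB X (f : J R -> X) := exists s : seq R, forall r t : J R,
  sval r <= sval t -> (forall p, p \in s -> ~ (sval r < p <= sval t)) -> f r = f t.
Arguments stepB {X}.

Lemma step_B X (f : J R -> X) : is_step f -> stepB f.
Proof.
case=> n [a [H0 H1 H2 H3]].
exists [seq a k | k <- iota 0 n.+1] => r t rt Hno.
have [r0 r1] := Jbnd r.
have [k [kn /andP [Hk1 Hk2]]] := @part_locate n a H0 H1 H2 _ r0 r1.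
have tk : sval t < a k.+1.
  rewrite ltNge; apply/negP => Ht; apply: (Hno (a k.+1)).
    by apply: map_f; rewrite mem_iota add0n ltnS.
  by rewrite Hk2 Ht.
apply: (H3 k kn r t); first by rewrite Hk1 Hk2.
by rewrite (le_trans Hk1 rt) tk.
Qed.

Lemma B_step X (f : J R -> X) : stepB f -> is_step f.
Proof.
case=> s Hs.
pose s' := sort <=%O (undup (0 :: 1 :: [seq p <- s | (0 < p) && (p < 1)])).
have mems x : x \in s' -> 0 <= x <= 1.
  rewrite mem_sort mem_undup !inE mem_filter => /orP [/eqP ->|/orP [/eqP ->|]].
  - by rewrite lexx ler01.
  - by rewrite ler01 lexx.
  by case/andP => /andP [h1 h2] _; rewrite ltW // ltW.
have mem0 : 0 \in s' by rewrite mem_sort mem_undup !inE eqxx.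
have mem1 : 1 \in s' by rewrite mem_sort mem_undup !inE eqxx orbT.
have sortlt : sorted <%O s' by rewrite sort_lt_sorted undup_uniq.
have sortle : sorted <=%O s' by apply: sort_le_sorted.
have size0 : (0 < size s')%N by move: mem0; rewrite -index_mem; apply: leq_ltn_trans.
pose n := (size s').-1.
have nsz : n.+1 = size s' by rewrite /n prednK.
have lenth i j : (i <= j)%N -> (j < size s')%N -> nth 0 s' i <= nth 0 s' j.
  move=> ij js; apply: (sorted_leq_nth le_trans lexx) => //.
  by rewrite inE (leq_ltn_trans ij js).
have memn i : (i < size s')%N -> 0 <= nth 0 s' i <= 1 by move=> h; apply/mems/mem_nth.
exists n, (fun k => nth 0 s' k); split.
- apply/eqP; rewrite eq_le; apply/andP; split; last by case/andP: (memn 0%N size0).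
  rewrite -{2}(nth_index 0 mem0); apply: lenth => //; by rewrite index_mem.
- have nlt : (n < size s')%N by rewrite -nsz.
  apply/eqP; rewrite eq_le; apply/andP; split; first by case/andP: (memn n nlt).
  rewrite -{1}(nth_index 0 mem1); apply: lenth; last by rewrite -nsz.
  by rewrite -ltnS nsz index_mem.
- move=> k kn; apply: (sorted_ltn_nth lt_trans) => //; rewrite inE -nsz.
    by rewrite ltnS ltnW.
  by rewrite ltnS.
move=> k kn.
have noin : forall r t : J R, nth 0 s' k <= sval r < nth 0 s' k.+1 ->
    nth 0 s' k <= sval t < nth 0 s' k.+1 -> sval r <= sval t -> f r = f t.
  move=> r t /andP [r1 r2] /andP [t1 t2] rt; apply: Hs => // p ps /andP [rp pt].
  have ksz : (k.+1 < size s')%N by rewrite -nsz ltnS.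
  have p0 : 0 < p.
    by apply: le_lt_trans rp; apply: le_trans r1; case/andP: (memn k (ltnW ksz)).
  have p1 : p < 1.
    by apply: le_lt_trans pt _; apply: lt_le_trans t2 _; case/andP: (memn _ ksz).
  have ps' : p \in s' by rewrite mem_sort mem_undup !inE mem_filter p0 p1 ps !orbT.
  have im : (index p s' < size s')%N by rewrite index_mem.
  case: (leqP (index p s') k) => hm.
    have := lenth _ _ hm (ltnW ksz); rewrite nth_index //.
    by move=> h; move: (lt_le_trans (le_lt_trans r1 rp) h); rewrite ltxx.
  have := lenth _ _ hm im; rewrite nth_index //.
  by move=> h; move: (lt_le_trans (le_lt_trans pt t2) h); rewrite ltxx.
move=> r t Hr Ht; case: (leP (sval r) (sval t)) => h; first exact: noin.
by apply/esym/noin => //; apply: ltW.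
Qed.

Lemma step_pair X Y (f : J R -> X) (g : J R -> Y) : is_step f -> is_step g ->
  is_step (fun r => (f r, g r)).
Proof.
move=> /step_B [s1 H1] /step_B [s2 H2]; apply: B_step; exists (s1 ++ s2) => r t rt Hn.
rewrite (H1 r t rt) ?(H2 r t rt) // => p ps; apply: Hn; rewrite mem_cat ps ?orbT //.
Qed.


Definition mu := (@lebesgue_measure R).
Definition badP (Q : J R -> Prop) : set R :=
  [set r : R | exists h : ((0 <= r) && (r < 1))%R, ~ Q (exist _ r h)].

Lemma mu_le (A B : set R) : A `<=` B -> (mu A <= mu B)%E.
Proof. rewrite /mu /lebesgue_measure /lebesgue_stieltjes_measure /measure_extension.
by move=> AB; apply: (le_outer_measure (measure_extension (wlength idfun))). Qed.
Lemma mu_U2 (A B : set R) : (mu (A `|` B) <= mu A + mu B)%E.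
Proof. rewrite /mu /lebesgue_measure /lebesgue_stieltjes_measure /measure_extension.
exact: outer_measureU2. Qed.
Lemma mu_ge0 (A : set R) : (0 <= mu A)%E.
Proof. rewrite /mu /lebesgue_measure /lebesgue_stieltjes_measure /measure_extension.
exact: outer_measure_ge0. Qed.
Lemma mu0 : mu set0 = 0%E.
Proof. exact: measure0. Qed.

Lemma bad3 (Q Q1 Q2 Q3 : J R -> Prop) : (forall r, Q1 r -> Q2 r -> Q3 r -> Q r) ->
  (mu (badP Q) <= mu (badP Q1) + mu (badP Q2) + mu (badP Q3))%E.
Proof.
move=> H.
have h2 : (mu ((badP Q1 `|` badP Q2) `|` badP Q3) <=
   mu (badP Q1) + mu (badP Q2) + mu (badP Q3))%E.
  apply: le_trans (mu_U2 _ _) _; apply: leeD => //; exact: mu_U2.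
apply: le_trans h2; apply: mu_le => x [h nQ].
case: (pselect (Q1 (exist _ x h))) => q1; last by left; left; exists h.
case: (pselect (Q2 (exist _ x h))) => q2; last by left; right; exists h.
case: (pselect (Q3 (exist _ x h))) => q3; last by right; exists h.
by exfalso; apply: nQ; apply: H.
Qed.

Lemma badT (Q : J R -> Prop) : (forall r, Q r) -> mu (badP Q) = 0%E.
Proof.
move=> H; apply/eqP; rewrite eq_le mu_ge0 andbT -mu0; apply: mu_le.
by move=> x [h nQ]; apply: nQ.
Qed.

Lemma sum_lt (m x : \bar R) (eps : R) : (0 <= m)%E -> (m < eps%:E)%E ->
  (x < (eps - fine m)%:E)%E -> (m + x < eps%:E)%E.
Proof.
case: m => [m| |] //=; case: x => [x| |] //=.
  by rewrite !lte_fin => _ _ h; change ((m + x)%:E < eps%:E)%E; rewrite lte_fin; lra.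
by move=> _ _ _; rewrite addeNy ltNye.
Qed.

Lemma sum_lt2 (x y : \bar R) (eps : R) : (x < (eps/2)%:E)%E -> (y < (eps/2)%:E)%E ->
  (x + y < eps%:E)%E.
Proof.
case: x => [x| |] //=; case: y => [y| |] //=.
- by rewrite !lte_fin => h1 h2; change ((x + y)%:E < eps%:E)%E; rewrite lte_fin; lra.
- by move=> _ _; rewrite addeNy ltNye.
- by move=> _ _; rewrite addNye ltNye.
- by move=> _ _; rewrite addNye ltNye.
Qed.

Lemma keyK (C : Type) (c : J R -> C) (P : C -> Prop) (F : C -> G -> G -> G) V :
  is_step c ->
  (forall cc, P cc -> exists A B, [/\ tau A, tau B, A z, B z &
     forall x y, A x -> B y -> V (F cc x y)]) ->
  exists A B, [/\ tau A, tau B, A z, B z & forall u w : J R -> G,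
     (mu (badP (fun r => V (F (c r) (u r) (w r)))) <=
      mu (badP (fun r => P (c r))) + mu (badP (fun r => A (u r))) +
      mu (badP (fun r => B (w r))))%E].
Proof.
move=> sc H; have [s Hs] := step_frange sc.
have [A [B [tA tB Az Bz HAB]]] := fin_inter s H.
exists A, B; split => // u w; apply: bad3 => r Pr Ar Br.
exact: HAB (Hs r) Pr _ _ Ar Br.
Qed.

Lemma step_op (f g : J R -> G) : is_step f -> is_step g -> is_step (op_pt op f g).
Proof. move=> sf sg; apply: step_dep (step_pair sf sg) _ => r t [e1 e2]; by rewrite /op_pt e1 e2. Qed.
Lemma step_inv (f : J R -> G) : is_step f -> is_step (inv_pt inv f).
Proof. move=> sf; apply: step_dep sf _ => r t e; by rewrite /inv_pt e. Qed.
Lemma step_zero : is_step (@zero_pt R G z).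
Proof. exact: step_const. Qed.

Lemma zeroO V eps : V z -> 0 < eps -> Obig V eps (@zero_pt R G z).
Proof.
move=> Vz e0; split; first exact: step_zero.
rewrite (_ : lebesgue_measure _ = mu (badP (fun r => V (zero_pt z r)))) //.
by rewrite badT // lte_fin.
Qed.

Lemma opf0 (f : J R -> G) : op_pt op f (zero_pt z) = f.
Proof. by apply: funext => r; rewrite /op_pt /zero_pt opzr. Qed.
Lemma op0f (f : J R -> G) : op_pt op (zero_pt z) f = f.
Proof. by apply: funext => r; rewrite /op_pt /zero_pt opzl. Qed.

Definition Bset (f : J R -> G) V (eps : R) := [set op_pt op f g | g in Obig V eps].

Lemma Obig_mu (V : set G) (eps : R) (g : J R -> G) : Obig V eps g ->
  is_step g /\ (mu (badP (fun r => V (g r))) < eps%:E)%E.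
Proof. by []. Qed.

Lemma basic_sub (f : J R -> G) V eps u : tau V -> is_step f -> Obig V eps u ->
  exists W, exists del : R, [/\ tau W, W z, 0 < del &
    Bset (op_pt op f u) W del `<=` Bset f V eps].
Proof.
move=> tV sf [su mu_u].
have := @keyK _ (fun r => (f r, u r)) (fun cc => V cc.2)
  (fun cc x y => op (inv cc.1) (op (op cc.1 cc.2) x)) V (step_pair sf su).
case.
  move=> [a b] /= Vb.
  have cP : contP (fun x y => op (inv a) (op (op a b) x)).
    by apply: contP_op; [apply: contP_cst | apply: contP_op; [apply: contP_cst|apply: contP_fst]].
  by apply: cP => //=; rewrite opzr cancel1.
move=> A [B [tA tB Az Bz HK]].
have {}mu_u : (mu (badP (fun r => V (u r))) < eps%:E)%E by [].
set m := mu (badP (fun r => V (u r))).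
have m0 : (0 <= m)%E by apply: mu_ge0.
have mfin : m = (fine m)%:E.
  by rewrite fineK // ge0_fin_numE //; apply: lt_trans mu_u _; rewrite ltry.
exists A, (eps - fine m); split => //.
  by rewrite subr_gt0 -lte_fin -mfin.
move=> x [w [sw mu_w] <-].
exists (fun r => op (inv (f r)) (op (op (f r) (u r)) (w r))).
  split.
    apply: step_dep (step_pair (step_pair sf su) sw) _ => r t [e1 e2 e3]; by rewrite e1 e2 e3.
  have := HK w (zero_pt z).
  rewrite (badT (Q := fun r => B (zero_pt z r))) // adde0 => h.
  apply: le_lt_trans h _; apply: sum_lt => //.
by apply: funext => r; rewrite /op_pt cancel2.
Qed.

Lemma basic_open_aux (f : J R -> G) V eps : is_step f -> Bset f V eps `<=` stepfuns R G.
Proof. by move=> sf x [g [sg _] <-]; apply: step_op. Qed.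

Definition Tset : set (set (J R -> G)) := [set U | U `<=` stepfuns R G /\
  forall f, U f -> exists V, exists eps : R, [/\ tau V, V z, 0 < eps & Bset f V eps `<=` U]].

Lemma basic_open (f : J R -> G) V eps : is_step f -> tau V -> V z -> 0 < eps ->
  Tset (Bset f V eps).
Proof.
move=> sf tV Vz e0; split; first exact: basic_open_aux.
move=> h [u Ou <-]; exact: basic_sub tV sf Ou.
Qed.

Lemma Bset_self (f : J R -> G) V eps : V z -> 0 < eps -> Bset f V eps f.
Proof. by move=> Vz e0; exists (zero_pt z); [apply: zeroO | apply: opf0]. Qed.

Lemma Obig_sub (V1 V2 : set G) (e1 e2 : R) (g : J R -> G) : V2 `<=` V1 -> e2 <= e1 -> Obig V2 e2 g -> Obig V1 e1 g.
Proof.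
move=> VV ee [sg mg]; split => //.
have mg' : (mu (badP (fun r => V2 (g r))) < e2%:E)%E by [].
rewrite (_ : lebesgue_measure _ = mu (badP (fun r => V1 (g r)))) //.
apply: le_lt_trans _ (lt_le_trans mg' _); last by rewrite lee_fin.
by apply: mu_le => x [h nV]; exists h => hv; apply: nV; apply: VV.
Qed.

Lemma topT : topology_on (stepfuns R G) Tset.
Proof.
split.
- by move=> U [].
- split => // f sf; exists setT, 1; split => //; try exact: tauT; try exact: ltr01; exact: basic_open_aux.
- by split => // f.
- move=> F FT; split.
    by move=> x [U FU Ux]; exact: (FT U FU).1 x Ux.
  move=> f [U FU Uf]; have [V [eps [tV Vz e0 H]]] := (FT U FU).2 f Uf.
  by exists V, eps; split => // x Bx; exists U => //; apply: H.
- move=> U V [UT HU] [VT HV]; split.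
    by move=> x [Ux _]; exact: UT.
  move=> f [Uf Vf].
  have [V1 [e1 [tV1 V1z e10 H1]]] := HU f Uf.
  have [V2 [e2 [tV2 V2z e20 H2]]] := HV f Vf.
  exists (V1 `&` V2), (Num.min e1 e2); split.
  + exact: tauI.
  + by split.
  + by rewrite lt_min e10 e20.
  move=> x [g Og <-]; split.
    apply: H1; exists g => //; apply: Obig_sub Og; [by move=> y [] | by rewrite ge_min lexx].
  apply: H2; exists g => //; apply: Obig_sub Og; [by move=> y [] | by rewrite ge_min lexx orbT].
Qed.

Lemma sepG (a b : G) : a <> b -> exists A B, [/\ tau A, tau B, A z, B z &
  forall x y, A x -> B y -> op a x <> op b y].
Proof.
move=> ab.
have cz : op (inv a) b <> z.
  by move=> e; apply: ab; rewrite -(cancel2 a b) e opzr.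
case: Htg => _ _ HT1 _ _.
have [U tU [Uc nUz]] := HT1 (op (inv a) b) z I I cz.
have cP : contP (fun x y => op (inv x) (op (inv a) (op b y))).
  apply: contP_op; first exact: contP_inv contP_fst.
  apply: contP_op; first exact: contP_cst.
  apply: contP_op; [exact: contP_cst | exact: contP_snd].
have [A [B [tA tB Az Bz H]]] : exists A B, [/\ tau A, tau B, A z, B z &
     forall x' y', A x' -> B y' -> U (op (inv x') (op (inv a) (op b y')))].
  by apply: cP => //; rewrite inv0 opzl opzr.
exists A, B; split => // x y Ax By e; apply: nUz.
by have := H x y Ax By; rewrite -e cancel1 invl.
Qed.

Lemma hausT : hausdorff_on (stepfuns R G) Tset.
Proof.
move=> f g sf sg fg.
have [r0 ne] : exists r0, f r0 <> g r0.
  apply: contrapT => h; apply: fg; apply: funext => r.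
  by apply: contrapT => h'; apply: h; exists r.
have [n [a [H0 H1 H2 H3]]] := step_pair sf sg.
have [r00 r01] := Jbnd r0.
have [k [kn /andP [k1 k2]]] := @part_locate n a H0 H1 H2 _ r00 r01.
have [A [B [tA tB Az Bz HAB]]] := sepG ne.
set l := a k.+1 - a k.
have l0 : 0 < l by rewrite subr_gt0; apply: H2.
have l20 : 0 < l / 2 by rewrite divr_gt0.
exists (Bset f A (l/2)), (Bset g B (l/2)); split.
- exact: basic_open.
- exact: basic_open.
- exact: Bset_self.
- exact: Bset_self.
apply/seteqP; split => // x [[u [su mu_u] e1] [w [sw mu_w] e2]].
exfalso.
have ak0 : 0 <= a k by have := part_mono H2 (leq0n k) (ltnW kn); rewrite H0.
have ak1 : a k.+1 <= 1 by have := part_mono H2 kn (leqnn n); rewrite H1.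
have sub : [set` `[a k, a k.+1[] `<=` badP (fun r => A (u r)) `|` badP (fun r => B (w r)).
  move=> y; rewrite /= in_itv /= => /andP [y1 y2].
  have hy : (0 <= y) && (y < 1) by rewrite (le_trans ak0 y1) (lt_le_trans y2 ak1).
  pose ry : J R := exist _ y hy.
  have ep : (f ry, g ry) = (f r0, g r0).
    by apply: (H3 k kn ry r0); rewrite /= ?y1 ?y2 ?k1 ?k2.
  case: ep => ef eg.
  case: (pselect (A (u ry))) => Au; last by left; exists hy.
  case: (pselect (B (w ry))) => Bw; last by right; exists hy.
  exfalso; apply: (HAB _ _ Au Bw); rewrite -ef -eg.
  by have := congr1 (fun h => h ry) (etrans e1 (esym e2)).
have := le_trans (mu_le sub) (mu_U2 _ _).
rewrite /mu lebesgue_measure_itv /= lte_fin (H2 k kn).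
have := sum_lt2 mu_u mu_w.
set M := (_ + _)%E => h1 h2.
have := le_lt_trans h2 h1.
by rewrite -EFinD lte_fin ltxx.
Qed.

Lemma T1T : T1_on (stepfuns R G) Tset.
Proof.
move=> x y sx sy xy; have [U [V [tU tV Ux Vy UV]]] := hausT sx sy xy.
exists U => //; split => // Uy.
have : (U `&` V) y by split.
by rewrite UV.
Qed.

Lemma cont_opf : continuous_op (stepfuns R G) Tset (op_pt op).
Proof.
move=> W [WS HW]; split; first by move=> p [].
move=> [f g] [[sf sg] Wfg] /=.
have [V [eps [tV Vz e0 HV]]] := HW _ Wfg.
have := @keyK _ (fun r => (f r, g r)) (fun _ => True)
  (fun cc x y => op (inv (op cc.1 cc.2)) (op (op cc.1 x) (op cc.2 y))) V (step_pair sf sg).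
case.
  move=> [a b] _ /=.
  have cP : contP (fun x y => op (inv (op a b)) (op (op a x) (op b y))).
    apply: contP_op; first exact: contP_cst.
    apply: contP_op; (apply: contP_op; first exact: contP_cst).
      exact: contP_fst.
    exact: contP_snd.
  by apply: cP => //; rewrite !opzr invl.
move=> A [B [tA tB Az Bz HK]].
have e20 : 0 < eps / 2 by rewrite divr_gt0.
exists (Bset f A (eps/2)), (Bset g B (eps/2)); split.
- exact: basic_open.
- exact: basic_open.
- exact: Bset_self.
- exact: Bset_self.
move=> [x y] [/= [u [su mu_u] <-] [w [sw mu_w] <-]].
split; first by split; apply: step_op.
apply: HV; exists (fun r => op (inv (op (f r) (g r))) (op (op (f r) (u r)) (op (g r) (w r)))).
  split.
    apply: step_dep (step_pair (step_pair sf sg) (step_pair su sw)) _.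
    by move=> r t [e1 e2 e3 e4]; rewrite e1 e2 e3 e4.
  have := HK u w; rewrite (badT (Q := fun r => True)) // add0e => h.
  exact: le_lt_trans h (sum_lt2 mu_u mu_w).
by apply: funext => r; rewrite /op_pt cancel2.
Qed.

Lemma cont_invf : continuous_on_carrier (stepfuns R G) Tset (inv_pt inv).
Proof.
move=> W [WS HW]; split; first by move=> x [].
move=> f [sf Wf].
have [V [eps [tV Vz e0 HV]]] := HW _ Wf.
have := @keyK _ f (fun _ => True)
  (fun a x y => op (inv (inv a)) (inv (op a x))) V sf.
case.
  move=> a _.
  have cP : contP (fun x y => op (inv (inv a)) (inv (op a x))).
    apply: contP_op; first exact: contP_cst.
    apply: contP_inv; apply: contP_op; [exact: contP_cst | exact: contP_fst].
  by apply: cP => //; rewrite opzr invl.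
move=> A [B [tA tB Az Bz HK]].
exists A, eps; split => //.
move=> x [u [su mu_u] <-]; split; first exact: step_op.
apply: HV; exists (fun r => op (inv (inv (f r))) (inv (op (f r) (u r)))).
  split.
    apply: step_dep (step_pair sf su) _.
    by move=> r t [e1 e2]; rewrite e1 e2.
  have := HK u (zero_pt z).
  rewrite (badT (Q := fun r => True)) // (badT (Q := fun r => B (zero_pt z r))) //.
  rewrite add0e adde0 => h.
  exact: le_lt_trans h mu_u.
by apply: funext => r; rewrite /op_pt /inv_pt cancel2.
Qed.

Lemma gyro_f : is_gyrogroup (stepfuns R G) (op_pt op) (zero_pt z) (inv_pt inv).
Proof.
have [gyr [Hi Hs Hh H3 H4]] := gyr_ex.
split.
- split; [exact: step_zero | by move=> a b; apply: step_op | by move=> a; apply: step_inv].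
- split.
    by move=> a _; split; [exact: op0f | exact: opf0].
  move=> z' sz' H; apply: funext => r.
  have [h _] := H _ step_zero.
  by move: h => /(congr1 (fun h => h r)); rewrite /op_pt /zero_pt opzr.
- split.
    by move=> x _; split; apply: funext => r; rewrite /op_pt /inv_pt /zero_pt ?invl ?invr.
  move=> x y _ _ e1 e2; apply: funext => r; apply: inv_uniq.
    exact: (congr1 (fun h => h r) e1).
  exact: (congr1 (fun h => h r) e2).
exists (fun f g h r => gyr (f r) (g r) (h r)); split.
- move=> f g sf sg; split.
  + move=> h sh; apply: step_dep (step_pair (step_pair sf sg) sh) _.
    by move=> r t [e1 e2 e3]; rewrite e1 e2 e3.
  + move=> u w _ _ e; apply: funext => r; apply: (Hi (f r) (g r)).
    exact: (congr1 (fun h => h r) e).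
  + move=> w sw.
    have hc : forall r, exists y, gyr (f r) (g r) y = w r by move=> r; apply: Hs.
    have [v Hv] := choice hc.
    exists v; last by apply: funext => r; exact: Hv.
    apply: step_dep (step_pair (step_pair sf sg) sw) _ => r t [e1 e2 e3].
    apply: (Hi (f r) (g r)); rewrite Hv e1 e2 Hv e3 //.
  + by move=> a b _ _; apply: funext => r; apply: Hh.
- by move=> x y w _ _ _; apply: funext => r; apply: H3.
- by move=> x y w _ _ _; apply: funext => r; apply: H4.
Qed.

Lemma mainL : exists T : set (set (J R -> G)),
    [/\ is_topological_gyrogroup (stepfuns R G) T (op_pt op) (zero_pt z) (inv_pt inv),
        hausdorff_on (stepfuns R G) T,
        (forall V (eps : R), tau V -> V z -> 0 < eps ->
           is_nbhd T (zero_pt z) (Obig V eps)) /\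
        (forall U, T U -> U (zero_pt z) ->
           exists V, exists eps : R,
             [/\ tau V, V z, 0 < eps & Obig V eps `<=` U]) &
        forall f, stepfuns R G f ->
          (forall V (eps : R), tau V -> V z -> 0 < eps ->
             is_nbhd T f [set op_pt op f g | g in Obig V eps]) /\
          (forall U, T U -> U f ->
             exists V, exists eps : R,
               [/\ tau V, V z, 0 < eps &
                   [set op_pt op f g | g in Obig V eps] `<=` U])].
Proof.
exists Tset; split.
- split; [exact: gyro_f | exact: topT | exact: T1T | exact: cont_opf | exact: cont_invf].
- exact: hausT.
- split.
    move=> V eps tV Vz e0; exists (Bset (zero_pt z) V eps).
      exact: basic_open step_zero tV Vz e0.
    split; first exact: Bset_self.
    by move=> x [g Og <-]; rewrite op0f.
  move=> U [US HU] U0; have [V [eps [tV Vz e0 H]]] := HU _ U0.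
  exists V, eps; split => // g Og; apply: H; exists g => //; exact: op0f.
- move=> f sf; split.
    move=> V eps tV Vz e0; exists (Bset f V eps); first exact: basic_open.
    by split; first exact: Bset_self.
  by move=> U [US HU] Uf; exact: HU.
Qed.
End All.

Theorem mainTheorem3 (R : realType) (G : Type) (op : G -> G -> G) (z : G)
    (inv : G -> G) (tau : set (set G)) :
  is_topological_gyrogroup setT tau op z inv ->
  exists T : set (set (J R -> G)),
    [/\ is_topological_gyrogroup (stepfuns R G) T (op_pt op) (zero_pt z) (inv_pt inv),
        hausdorff_on (stepfuns R G) T,
        (* {O(V,eps)} is a local base at the identity 0^bullet *)
        (forall V (eps : R), tau V -> V z -> 0 < eps ->
           is_nbhd T (zero_pt z) (Obig V eps)) /\
        (forall U, T U -> U (zero_pt z) ->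
           exists V, exists eps : R,
             [/\ tau V, V z, 0 < eps & Obig V eps `<=` U]) &
        (* {f (+) O(V,eps)} is a local base at f, for each f in G^bullet *)
        forall f, stepfuns R G f ->
          (forall V (eps : R), tau V -> V z -> 0 < eps ->
             is_nbhd T f [set op_pt op f g | g in Obig V eps]) /\
          (forall U, T U -> U f ->
             exists V, exists eps : R,
               [/\ tau V, V z, 0 < eps &
                   [set op_pt op f g | g in Obig V eps] `<=` U])].
Proof.
move=> H; exact: (@mainL R G op z inv tau H).
Qed.
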